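(* Let $\tau$ be a $T_1$-topology on $\mathcal{C}(p,q)$ such that $(\mathcal{C}(p,q),\tau)$ is a semitopological semigroup and the maps $\mathcal{C}(p,q)\to E(\mathcal{C}(p,q))$, $x\mapsto xx^{-1}$ and $x\mapsto x^{-1}x$, are continuous. If there exists an idempotent $q^ip^i\in\mathcal{C}(p,q)$ such that the subspace $E(\mathcal{C}(p,q))$ is semiregular at $q^ip^i$, then $\tau$ is discrete.
   Context: The bicyclic monoid $\mathcal{C}(p,q)$ is the monoid generated by $p,q$ subject only to $pq=1$; elements are uniquely $q^ip^j$, $i,j\in\omega$, with multiplication $q^kp^l\cdot q^mp^n = q^{k-l+m}p^n$ if $l<m$, $=q^kp^n$ if $l=m$, $=q^kp^{l-m+n}$ if $l>m$, and inversion $(q^ip^j)^{-1}=q^jp^i$. $E(\mathcal{C}(p,q))=\{q^ip^i:i\in\omega\}$ with the subspace topology. Semitopological semigroup: multiplication separately continuous. A subspace $Y$ is semiregular at $x\in Y$ if $x$ has a neighbourhood base in $Y$ consisting of sets $U$ with $U=\mathrm{int}_Y(\mathrm{cl}_Y(U))$. *)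

(* Defs.v *)
From Stdlib Require Import Arith.

(* The bicyclic monoid C(p,q): the element q^i p^j is encoded as (i, j). *)
Definition bicyclic : Type := (nat * nat)%type.

Definition bmul (x y : bicyclic) : bicyclic :=
  let (k, l) := x in let (m, n) := y in
  if l <? m then (k + (m - l), n)
  else if l =? m then (k, n)
  else (k, l - m + n).

Definition binv (x : bicyclic) : bicyclic := let (i, j) := x in (j, i).

Definition idem (x : bicyclic) : Prop := fst x = snd x.

Definition is_topology {X : Type} (O : (X -> Prop) -> Prop) : Prop :=
  O (fun _ => True) /\ O (fun _ => False) /\
  (forall U V, O U -> O V -> O (fun x => U x /\ V x)) /\
  (forall F : (X -> Prop) -> Prop, (forall U, F U -> O U) ->
     O (fun x => exists U, F U /\ U x)).

Definition T1 {X : Type} (O : (X -> Prop) -> Prop) : Prop :=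
  forall x y : X, x <> y -> exists U, O U /\ U x /\ ~ U y.

Definition continuous {X : Type} (O : (X -> Prop) -> Prop) (f : X -> X) : Prop :=
  forall V, O V -> O (fun x => V (f x)).

Definition semitopological {X : Type} (O : (X -> Prop) -> Prop)
  (mul : X -> X -> X) : Prop :=
  forall a, continuous O (mul a) /\ continuous O (fun x => mul x a).

Definition sub_open {X : Type} (O : (X -> Prop) -> Prop) (Y W : X -> Prop) : Prop :=
  exists V, O V /\ forall z, W z <-> (V z /\ Y z).

Definition continuous_into {X : Type} (O : (X -> Prop) -> Prop) (Y : X -> Prop)
  (f : X -> X) : Prop :=
  (forall x, Y (f x)) /\ forall W, sub_open O Y W -> O (fun x => W (f x)).

Definition sub_closure {X : Type} (O : (X -> Prop) -> Prop) (Y U : X -> Prop)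
  : X -> Prop :=
  fun z => Y z /\ forall W, sub_open O Y W -> W z -> exists w, W w /\ U w.

Definition sub_interior {X : Type} (O : (X -> Prop) -> Prop) (Y A : X -> Prop)
  : X -> Prop :=
  fun z => exists W, sub_open O Y W /\ W z /\ (forall w, W w -> A w).

Definition semiregular_at {X : Type} (O : (X -> Prop) -> Prop) (Y : X -> Prop)
  (x : X) : Prop :=
  Y x /\
  forall W, sub_open O Y W -> W x ->
    exists U, sub_open O Y U /\ U x /\ (forall z, U z -> W z) /\
      (forall z, U z <-> sub_interior O Y (sub_closure O Y U) z).

Definition discrete {X : Type} (O : (X -> Prop) -> Prop) : Prop :=
  forall U : X -> Prop, O U.

(* Main.v *)
Require Import Defs.
From Stdlib Require Import Arith Lia FunctionalExtensionality PropExtensionality Classical.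

Ltac bsimp := repeat (cbv beta iota zeta; match goal with
  | |- context[?x <? ?y] => destruct (Nat.ltb_spec x y)
  | |- context[?x =? ?y] => destruct (Nat.eqb_spec x y) end); cbv beta iota zeta.

Lemma peq (a b c d : nat) : (a,b) = (c,d) <-> a = c /\ b = d.
Proof. split; [intro H; injection H; auto | intros [-> ->]; auto]. Qed.

Lemma O_ext (O : (bicyclic -> Prop) -> Prop) U V :
  O U -> (forall x, U x <-> V x) -> O V.
Proof.
  intros H E. replace V with U; auto.
  extensionality x; apply propositional_extensionality; auto.
Qed.

Lemma mul_inv x : bmul x (binv x) = (fst x, fst x).
Proof. destruct x as [a b]; unfold bmul, binv; bsimp; simpl; auto; lia. Qed.

Lemma inv_mul x : bmul (binv x) x = (snd x, snd x).
Proof. destruct x as [a b]; unfold bmul, binv; bsimp; simpl; auto; lia. Qed.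

Lemma L1 a b : bmul (a,a) (b,b) = (Nat.max a b, Nat.max a b).
Proof. unfold bmul; bsimp; f_equal; lia. Qed.

Lemma L2 j x : bmul (j,0) (bmul x (0,j)) = (j,j) <-> x = (0,0).
Proof.
  destruct x as [a b]; unfold bmul; bsimp; repeat rewrite peq; lia.
Qed.

Lemma L3 i a : bmul (0,i) (bmul (a,a) (i,0)) = (0,0) <-> a <= i.
Proof.
  unfold bmul; bsimp; repeat rewrite peq; lia.
Qed.

Lemma point_open (O : (bicyclic -> Prop) -> Prop) G H i j :
  is_topology O ->
  continuous_into O idem (fun x => bmul x (binv x)) ->
  continuous_into O idem (fun x => bmul (binv x) x) ->
  O G -> (forall a, G (a,a) <-> a = i) ->
  O H -> (forall a, H (a,a) <-> a = j) ->
  O (fun x => x = (i,j)).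
Proof.
  intros (_&_&Hint&_) [_ C1] [_ C2] HG EG HH EH.
  assert (S1 : sub_open O idem (fun z => G z /\ idem z)).
  { exists G; split; auto; tauto. }
  assert (S2 : sub_open O idem (fun z => H z /\ idem z)).
  { exists H; split; auto; tauto. }
  pose proof (Hint _ _ (C1 _ S1) (C2 _ S2)) as Hx.
  eapply O_ext; [exact Hx|].
  intros [a b]; cbv beta. rewrite mul_inv, inv_mul. simpl.
  unfold idem; simpl. rewrite EG, EH, peq. tauto.
Qed.

Lemma isolate (O : (bicyclic -> Prop) -> Prop) n : T1 O -> is_topology O ->
  forall G, O G -> (exists a, G (a,a)) -> (forall a, G (a,a) -> a <= n) ->
  exists G' j, O G' /\ forall a, G' (a,a) <-> a = j.
Proof.
  intros HT1 HT. destruct HT as (_&_&Hint&_).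
  induction n; intros G HG [a0 Ga0] Hb.
  - exists G, 0; split; auto. intro a; split; intro H.
    + specialize (Hb _ H); lia.
    + subst. specialize (Hb _ Ga0). replace a0 with 0 in Ga0 by lia. auto.
  - destruct (classic (G (S n, S n))) as [HS|HS].
    + destruct (classic (exists a, a < S n /\ G (a,a))) as [[a [Ha Ga]]|Hn].
      * destruct (HT1 (a,a) (S n, S n)) as [U [HU [Ua nUS]]].
        { intro E; injection E; lia. }
        apply (IHn (fun x => G x /\ U x)); auto.
        -- exists a; auto.
        -- intros b [Gb Ub]. specialize (Hb _ Gb).
           destruct (Nat.eq_dec b (S n)); [subst; contradiction| lia].
      * exists G, (S n); split; auto. intro a; split; intro H.
        -- specialize (Hb _ H). destruct (Nat.eq_dec a (S n)); auto.
           exfalso; apply Hn; exists a; split; auto; lia.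
        -- subst; auto.
    + apply (IHn G); eauto.
      intros b Gb. specialize (Hb _ Gb).
      destruct (Nat.eq_dec b (S n)); [subst; contradiction| lia].
Qed.

Lemma step2 (O : (bicyclic -> Prop) -> Prop) V1 V2 u v :
  is_topology O -> semitopological O bmul -> O V1 -> O V2 ->
  V1 (u,u) -> V2 (v,v) -> u <= v ->
  (forall a, V1 (a,a) -> V2 (a,a) -> False) ->
  exists G, O G /\ (exists a, G (a,a)) /\ (forall a, G (a,a) -> a <= v).
Proof.
  intros (_&_&Hint&_) Hs H1 H2 V1u V2v Huv Hd.
  exists (fun y => V1 y /\ V2 (bmul y (v,v))). split; [|split].
  - apply Hint; auto. apply (proj2 (Hs (v,v))); auto.
  - exists u. rewrite L1, Nat.max_r by lia. auto.
  - intros a [Va Vb]. rewrite L1 in Vb. destruct (le_gt_dec a v); auto.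
    rewrite Nat.max_l in Vb by lia. exfalso; eauto.
Qed.

Theorem proposition5 (O : (bicyclic -> Prop) -> Prop) :
  is_topology O -> T1 O -> semitopological O bmul ->
  continuous_into O idem (fun x => bmul x (binv x)) ->
  continuous_into O idem (fun x => bmul (binv x) x) ->
  (exists i : nat, semiregular_at O idem (i, i)) ->
  discrete O.
Proof.
  intros HT HT1 Hs Hc1 Hc2 [i [_ Hsr]].
  destruct (HT1 (i,i) (S i, S i)) as [V0 [HV0 [V0i nV0]]].
  { intro E; injection E; lia. }
  assert (HW : sub_open O idem (fun z => V0 z /\ idem z)).
  { exists V0; split; auto; tauto. }
  destruct (Hsr _ HW (conj V0i eq_refl)) as [U [[V1 [HV1 HU]] [Ui [UW Ureg]]]].
  assert (Hex : exists w, idem w /\ ~ sub_closure O idem U w).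
  { apply NNPP; intro Hn.
    assert (US : U (S i, S i)).
    { apply Ureg. exists (fun z => idem z). split; [|split].
      - exists (fun _ => True). split; [apply HT| tauto].
      - reflexivity.
      - intros w Hw. apply NNPP; intro; apply Hn; eauto. }
    destruct (UW _ US); contradiction. }
  destruct Hex as [w [Hw Hncl]].
  assert (Hex2 : exists W2, sub_open O idem W2 /\ W2 w /\ forall u, W2 u -> ~ U u).
  { apply NNPP; intro Hn2; apply Hncl; split; auto.
    intros W2 HW2 W2w; apply NNPP; intro Hn3; apply Hn2; exists W2;
    repeat split; auto; intros u Hu1 Hu2; apply Hn3; eauto. }
  destruct Hex2 as [W2 [[V2 [HV2 HW2]] [W2w W2U]]].
  destruct w as [v v']; unfold idem in Hw; simpl in Hw; subst v'.
  assert (V1i : V1 (i,i)) by (apply HU; auto).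
  assert (V2v : V2 (v,v)) by (apply HW2; auto).
  assert (Hd : forall a, V1 (a,a) -> V2 (a,a) -> False).
  { intros a Ha Hb. apply (W2U (a,a)); [apply HW2|apply HU]; split; auto; reflexivity. }
  assert (Hb : exists G n, O G /\ (exists a, G (a,a)) /\ (forall a, G (a,a) -> a <= n)).
  { destruct (le_ge_dec i v).
    - destruct (step2 O V1 V2 i v) as [G HG]; eauto.
    - destruct (step2 O V2 V1 v i) as [G HG]; eauto. }
  destruct Hb as [G [n [HG [Gne Gb]]]].
  destruct (isolate O n HT1 HT G HG Gne Gb) as [G' [j [HG' EG']]].
  pose proof (point_open O G' G' j j HT Hc1 Hc2 HG' EG' HG' EG') as Hjj.
  assert (H00 : O (fun x => x = (0,0))).
  { pose proof (proj1 (Hs (j,0)) _ Hjj) as S1.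
    pose proof (proj2 (Hs (0,j)) _ S1) as S2.
    eapply O_ext; [exact S2|]. intro x; cbv beta. apply L2. }
  assert (HGi : forall k, exists Gk, O Gk /\ forall a, Gk (a,a) <-> a = k).
  { intro k.
    pose proof (proj1 (Hs (0,k)) _ H00) as A1.
    pose proof (proj2 (Hs (k,0)) _ A1) as A2. cbv beta in A2.
    destruct k as [|k].
    - eexists; split; [exact A2|]. intro a; cbv beta; rewrite L3; lia.
    - destruct (HT1 (S k, S k) (k,k)) as [V [HV [VS nVk]]].
      { intro E; injection E; lia. }
      pose proof (proj2 (Hs (k,k)) _ HV) as B.
      destruct HT as (_&_&Hint&_).
      eexists; split; [exact (Hint _ _ A2 B)|].
      intro a; cbv beta; rewrite L3, L1. split.
      + intros [Ha Hv]. destruct (Nat.eq_dec a (S k)); auto.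
        rewrite Nat.max_r in Hv by lia. contradiction.
      + intro; subst. rewrite Nat.max_l by lia. auto. }
  assert (Hpt : forall a b, O (fun x => x = (a,b))).
  { intros a b. destruct (HGi a) as [Ga [HGa EGa]]. destruct (HGi b) as [Gb' [HGb EGb]].
    exact (point_open O Ga Gb' a b HT Hc1 Hc2 HGa EGa HGb EGb). }
  intro W. destruct HT as (_&_&_&Hun).
  pose proof (Hun (fun S => exists x, W x /\ S = (fun y => y = x))) as HU'.
  eapply O_ext; [apply HU'|].
  - intros S [[a b] [_ E]]; subst; apply Hpt.
  - intro x; split.
    + intros [S0 [[y [Wy E]] Sx]]; subst S0; cbv beta in Sx; subst x; auto.
    + intro Wx. exists (fun y => y = x). split; auto. exists x; auto.
Qed.
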